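(* Let $f,g\in\ell_1(\mathbb{Z})$ and $\delta,\kappa>0$. Let $I\subset\mathbb{Z}$ be an integer interval and $I=I_1\cup I_2\cup I_3$ a partition of $I$ into three subsets (not necessarily intervals) such that $|I_3|\in[\delta|I|/2,\delta|I|]$, $|I_2|\leq\delta|I|$, and $f(t_1)\geq\kappa+f(t_3)$ for all $t_1\in I_1$, $t_3\in I_3$. Let $X$ be an integer random variable uniformly distributed on an integer interval $J\subset\mathbb{Z}$ of cardinality at least $|I|$. Then $$\mathbb{P}\big\{|\{t\in I:\ |f(t)-g(t+X)|\geq\kappa/2\}|<\delta|I|/4\big\}\leq 64\delta.$$ *)

(* Defs.v *)
From mathcomp Require Import all_boot all_order all_algebra.
From mathcomp Require Import all_classical all_reals esum.
Set Implicit Arguments. Unset Strict Implicit. Unset Printing Implicit Defensive.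
Import Order.TTheory GRing.Theory Num.Theory.
Local Open Scope ring_scope.

Definition zinterval (a : int) (n : nat) : seq int :=
  [seq a + (i%:Z) | i <- iota 0 n].

Definition ell1 (R : realType) (f : int -> R) : Prop :=
  summable [set: int] (fun k => (f k)%:E).

Definition cardin (R : realType) (A : pred int) (s : seq int) : R :=
  (count A s)%:R.

Definition unif_prob (R : realType) (a : int) (m : nat) (E : pred int) : R :=
  (count E (zinterval a m))%:R / m%:R.

(* Main.v *)
Require Import Defs.
From mathcomp Require Import all_boot all_order all_algebra.
From mathcomp Require Import all_classical all_reals esum.
From mathcomp Require Import zify ring lra.
Import Order.TTheory GRing.Theory Num.Theory.
Local Open Scope ring_scope.

Lemma mem_zinterval (a s : int) (n : nat) :
  (s \in zinterval a n) = (a <= s) && (s < a + n%:Z).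
Proof.
apply/mapP/andP.
- case=> i; rewrite mem_iota add0n => /andP[_ hi] ->.
  split; first by rewrite lerDl.
  by rewrite ltrD2l ltz_nat.
- case=> h1 h2; exists `|s - a|%N.
  + rewrite mem_iota add0n /= -ltz_nat gez0_abs ?subr_ge0 //.
    by rewrite ltrBlDl.
  + by rewrite gez0_abs ?subr_ge0 // subrKC.
Qed.

Lemma zinterval_add (a : int) (p q : nat) :
  zinterval a (p + q) = zinterval a p ++ zinterval (a + p%:Z) q.
Proof.
rewrite /zinterval iotaD map_cat; congr (_ ++ _).
rewrite add0n -{1}(addn0 p) (iotaDl p 0 q) -map_comp; apply: eq_map => i /=.
by rewrite PoszD addrA.
Qed.

Lemma zinterval_shift (c y : int) (n : nat) :
  zinterval (c + y) n = map (fun t => t + y) (zinterval c n).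
Proof. by rewrite /zinterval -map_comp; apply: eq_map => i /=; rewrite addrAC. Qed.

Lemma zinterval_uniq (a : int) (n : nat) : uniq (zinterval a n).
Proof.
rewrite /zinterval map_inj_uniq ?iota_uniq //.
move=> i j /addrI [] //.
Qed.

Lemma count_le_or (T : eqType) (s : seq T) (P Q R : pred T) :
  {in s, forall t, P t -> Q t || R t} -> (count P s <= count Q s + count R s)%N.
Proof.
elim: s => //= x s IH H.
have H' : {in s, forall t, P t -> Q t || R t}.
  by move=> t ts; apply: H; rewrite inE ts orbT.
have := IH H'; have := H x (mem_head _ _).
case: (P x); case: (Q x); case: (R x) => //= Hx; try (by have := Hx isT); lia.
Qed.

Lemma count_sumR (R : realType) (T : eqType) (s : seq T) (P Q : pred T) :
  ((count (fun t => P t && Q t) s)%:R : R) = \sum_(t <- s | P t) ((Q t)%:R : R).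
Proof.
elim: s => [|x s IH]; first by rewrite big_nil.
by rewrite big_cons /= natrD IH; case: (P x) => //=; rewrite add0r.
Qed.

Lemma sum_constR (R : realType) (T : eqType) (s : seq T) (P : pred T) (k : R) :
  \sum_(t <- s | P t) k = (count P s)%:R * k.
Proof.
elim: s => [|x s IH]; first by rewrite big_nil mul0r.
rewrite big_cons /= natrD mulrDl IH; case: (P x) => /=; by rewrite ?mul1r ?mul0r ?add0r.
Qed.

Lemma seq_min (s : seq int) : s != [::] ->
  exists2 x, x \in s & forall y, y \in s -> x <= y.
Proof.
elim: s => // x s IH _.
case: (eqVneq s [::]) => [->|sn].
  by exists x; [exact: mem_head | move=> y; rewrite inE => /eqP ->].
case: (IH sn) => z zs Hz.
case: (lerP x z) => hxz.
- exists x; first exact: mem_head.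
  move=> y; rewrite inE => /orP[/eqP->//|ys]; exact: le_trans hxz (Hz _ ys).
- exists z; first by rewrite inE zs orbT.
  move=> y; rewrite inE => /orP[/eqP->|ys]; [exact: ltW|exact: Hz].
Qed.

Lemma seq_max (s : seq int) : s != [::] ->
  exists2 x, x \in s & forall y, y \in s -> y <= x.
Proof.
elim: s => // x s IH _.
case: (eqVneq s [::]) => [->|sn].
  by exists x; [exact: mem_head | move=> y; rewrite inE => /eqP ->].
case: (IH sn) => z zs Hz.
case: (lerP z x) => hxz.
- exists x; first exact: mem_head.
  move=> y; rewrite inE => /orP[/eqP->//|ys]; exact: le_trans (Hz _ ys) hxz.
- exists z; first by rewrite inE zs orbT.
  move=> y; rewrite inE => /orP[/eqP->|ys]; [exact: ltW|exact: Hz].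
Qed.

Theorem lemma4p8 (R : realType) (f g : int -> R) (delta kappa : R)
  (c : int) (n : nat) (I1 I2 I3 : pred int) (a : int) (m : nat) :
  ell1 f -> ell1 g -> 0 < delta -> 0 < kappa ->
  (* I = zinterval c n is partitioned into I1, I2, I3 *)
  (forall t, I1 t || I2 t || I3 t -> t \in zinterval c n) ->
  (forall t, t \in zinterval c n -> I1 t || I2 t || I3 t) ->
  (forall t, ~~ (I1 t && I2 t)) -> (forall t, ~~ (I1 t && I3 t)) ->
  (forall t, ~~ (I2 t && I3 t)) ->
  delta * n%:R / 2 <= cardin R I3 (zinterval c n) <= delta * n%:R ->
  cardin R I2 (zinterval c n) <= delta * n%:R ->
  (forall t1 t3, I1 t1 -> I3 t3 -> kappa + f t3 <= f t1) ->
  (* X uniform on J = zinterval a m, nonempty, with |J| >= |I| *)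
  (0 < m)%N -> (n <= m)%N ->
  unif_prob R a m
    (fun x => cardin R (fun t => kappa / 2 <= `|f t - g (t + x)|) (zinterval c n)
              < delta * n%:R / 4)
  <= 64 * delta.
Proof.
move=> _ _ dpos kpos Hin Hcov H12 H13 H23 /andP[H3lo H3hi] H2 Hf m0 nm.
rewrite /unif_prob /cardin in H3lo H3hi H2 *.
set Is := zinterval c n in H3lo H3hi H2 Hcov *.
pose bad (x t : int) : bool := kappa / 2 <= `|f t - g (t + x)|.
pose good (x : int) : bool := (count (bad x) Is)%:R < delta * n%:R / 4.
change ((count good (zinterval a m))%:R / m%:R <= 64 * delta).
have mpos : (0 : R) < m%:R by rewrite ltr0n.
rewrite ler_pdivrMr //.
have [n0|npos] := posnP n.
  have -> : count good (zinterval a m) = 0%N.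
    rewrite (@eq_count _ _ pred0) ?count_pred0 // => x.
    by rewrite /good /= n0 mulr0 mul0r ltNge ler0n.
  by apply: mulr_ge0; [apply: mulr_ge0; [by []|exact: ltW]|exact: ler0n].
set D := delta * n%:R in H3lo H3hi H2.
have Dpos : 0 < D by rewrite mulr_gt0 // ltr0n.
pose Lp (s : int) : bool := has (fun t3 => g s < f t3 + kappa / 2) (seq.filter I3 Is).
have factA : forall x, good x ->
    D / 4 < (count (fun t => I3 t && Lp (t + x)%R) Is)%:R.
  move=> x gx.
  have hn : (count I3 Is <= count (fun t => I3 t && Lp (t + x)%R) Is + count (bad x) Is)%N.
    apply: count_le_or => t ts I3t.
    case: (boolP (bad x t)) => hb; first by rewrite orbT.
    rewrite I3t /= /Lp ?orbF; apply/seq.hasP.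
apply: (@ex_intro2 _ _ _ t); first by rewrite mem_filter I3t ts.
    move: hb; rewrite /bad -ltNge ltr_norml => /andP[h1 h2]; lra.
  move: hn; rewrite -(ler_nat R) natrD => hn.
  move: gx; rewrite /good -/D => gx; lra.
have factB : forall y, good y ->
    (count (fun t => Lp (t + y)%R) Is)%:R < 9 / 4 * D.
  move=> y gy.
  have hn1 : (count (fun t => Lp (t + y)%R) Is <=
              count I2 Is + count (fun t => I3 t || bad y t) Is)%N.
    apply: count_le_or => t ts Lt.
    have := Hcov t ts; case/orP => [/orP[I1t|I2t]|I3t]; [ | by rewrite I2t | by rewrite I3t orbT].
    rewrite /=.
    case: (boolP (bad y t)) => hb; first by rewrite !orbT.
    exfalso; move: Lt; rewrite /Lp => /seq.hasP[] => t3; rewrite mem_filter => /andP[I3t3 _] hg.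
    have := Hf t t3 I1t I3t3.
    move: hb; rewrite /bad -ltNge ltr_norml => /andP[h1 h2]; lra.
  have hn2 : (count (fun t => I3 t || bad y t) Is <= count I3 Is + count (bad y) Is)%N.
    by apply: count_le_or => u _ /orP[]->; rewrite ?orbT.
  have hn := leq_trans hn1 (leq_add (leqnn _) hn2).
  move: hn; rewrite -(ler_nat R) !natrD => hn.
  move: gy; rewrite /good -/D => gy; lra.
have block : forall a', (count good (zinterval a' n))%:R <= 18 * D.
  move=> a'; set K := zinterval a' n.
  have [->|cpos] := posnP (count good K); first by rewrite mulr_ge0 // ltW.
  have ne : seq.filter good K != [::] by rewrite -size_eq0 size_filter -lt0n.
  case: (seq_min _ ne) => xmin; rewrite mem_filter => /andP[gmin Kmin] Hmin.
  case: (seq_max _ ne) => xmax; rewrite mem_filter => /andP[gmax Kmax] Hmax.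
  have cover : forall t, t \in Is ->
    (count (fun x => good x && Lp (t + x)%R) K <=
     count (fun t' => Lp (t' + xmin)%R) Is + count (fun t' => Lp (t' + xmax)%R) Is)%N.
    move=> t ts.
    rewrite -!(count_map (fun t' => t' + _) Lp) -count_cat -size_filter.
    rewrite -(size_map (fun x => t + x)) -size_filter.
    apply: uniq_leq_size.
      rewrite map_inj_uniq ?filter_uniq ?zinterval_uniq //; exact: addrI.
    move=> s /mapP[x]; rewrite mem_filter => /andP[/andP[gx Lx] xK] ->.
    have h1 := Hmin x; have h2 := Hmax x.
    rewrite mem_filter gx xK in h1 h2; have {}h1 := h1 isT; have {}h2 := h2 isT.
    rewrite mem_filter Lx /= mem_cat.
    move: ts xK Kmin Kmax; rewrite /Is /K !mem_zinterval => /andP[ts1 ts2] /andP[xK1 xK2] /andP[Km1 Km2] /andP[KM1 KM2].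
    case: (ltP (t + x) (c + xmin + n%:Z)) => h.
    - apply/orP; left; apply/mapP; exists (t + x - xmin); last by rewrite subrK.
      rewrite mem_zinterval; apply/andP; split; clear -h h1 h2 ts1 ts2 xK1 xK2 Km1 Km2 KM1 KM2; lia.
    - apply/orP; right; apply/mapP; exists (t + x - xmax); last by rewrite subrK.
      rewrite mem_zinterval; apply/andP; split; clear -h h1 h2 ts1 ts2 xK1 xK2 Km1 Km2 KM1 KM2; lia.
  have lower : (count good K)%:R * (D / 4) <=
      \sum_(x <- K | good x) ((count (fun t => I3 t && Lp (t + x)%R) Is)%:R : R).
    rewrite -sum_constR; apply: ler_sum => x gx; exact: ltW (factA x gx).
  have eq1 : \sum_(x <- K | good x) ((count (fun t => I3 t && Lp (t + x)%R) Is)%:R : R)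
      = \sum_(t <- Is | I3 t) \sum_(x <- K | good x) ((Lp (t + x)%R)%:R : R).
    under eq_bigr do rewrite count_sumR.
    exact: exchange_big.
  have upper : \sum_(t <- Is | I3 t) \sum_(x <- K | good x) ((Lp (t + x)%R)%:R : R)
      <= (count I3 Is)%:R * ((count (fun t' => Lp (t' + xmin)%R) Is)%:R
                            + (count (fun t' => Lp (t' + xmax)%R) Is)%:R).
    rewrite -sum_constR big_seq_cond [X in _ <= X]big_seq_cond.
    apply: ler_sum => t /andP[ts _].
    by rewrite -count_sumR -natrD ler_nat; exact: cover.
  have bmin := factB _ gmin; have bmax := factB _ gmax.
  set X := (count good K)%:R in lower *.
  set c3 := (count I3 Is)%:R in H3lo H3hi upper.
  set cmin := (count (fun t' => Lp (t' + xmin)%R) Is)%:R in upper bmin.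
  set cmax := (count (fun t' => Lp (t' + xmax)%R) Is)%:R in upper bmax.
  have c3p : 0 <= c3 by rewrite ler0n.
  have cminp : 0 <= cmin by rewrite ler0n.
  have cmaxp : 0 <= cmax by rewrite ler0n.
  have hX : X * (D / 4) <= D * (9 / 2 * D).
    apply: le_trans lower _; rewrite eq1; apply: le_trans upper _.
    apply: ler_pM; [exact: c3p | by rewrite addr_ge0 | exact: H3hi | lra].
  have D4 : 0 < D / 4 by rewrite divr_gt0.
  rewrite -(ler_pM2r D4).
  have -> : 18 * D * (D / 4) = D * (9 / 2 * D) by field.
  exact: hX.
have iter : forall k a0, (count good (zinterval a0 (k * n)))%:R <= k%:R * (18 * D).
  elim=> [|k IH] a0; first by rewrite mul0n mul0r.
  rewrite mulSn zinterval_add count_cat natrD -addn1 natrD mulrDl mul1r [X in _ <= X]addrC.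
  apply: lerD; [exact: block | exact: IH].
pose k := (m %/ n).+1.
have mk : (m <= k * n)%N by apply: ltnW; exact: ltn_ceil.
have kn : (k * n <= m + m)%N.
  rewrite /k mulSn addnC; apply: leq_add => //; exact: leq_divM.
have h1 : (count good (zinterval a m) <= count good (zinterval a (k * n)))%N.
  by rewrite -(subnKC mk) zinterval_add count_cat leq_addr.
have h2 := iter k a.
move: h1 kn; rewrite -(ler_nat R) => h1; rewrite -(ler_nat R) natrD natrM => kn.
rewrite /D in h2.
set G := (count good (zinterval a m))%:R in h1 h2 *.
set Gk := (count good (zinterval a (k * n)))%:R in h1 h2.
have e : k%:R * (18 * (delta * n%:R)) = 18 * delta * (k%:R * n%:R) by ring.
rewrite e in h2.
have h3 : 18 * delta * (k%:R * n%:R) <= 18 * delta * (m%:R + m%:R).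
  by apply: ler_wpM2l; [rewrite mulr_ge0 // ltW | exact: kn].
have -> : 64 * delta * m%:R = 64 * (delta * m%:R) by ring.
have e2 : 18 * delta * (m%:R + m%:R) = 36 * (delta * m%:R) by ring.
rewrite e2 in h3.
have : 0 <= delta * m%:R by rewrite mulr_ge0 // ltW.
set P := delta * m%:R in h3 *.
set Q := 18 * delta * (k%:R * n%:R) in h2 h3.
lra.
Qed.
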